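(* Let $G$ be a locally compact second countable group, $\rho_0,\rho_1:G\to\mathrm{Homeo}^+(S^1)$ continuous actions, and $\varphi:S^1\to S^1$ a covering map of degree $k$ such that $\rho_0(g)\varphi=\varphi\rho_1(g)$ for all $g\in G$. Then $\rho_0^*(e^b)=k\,\rho_1^*(e^b)$ in $H^2_{bc}(G,\mathbb Z)$.
   Context: $S^1=\mathbb Z\backslash\mathbb R$. For $f\in\mathrm{Homeo}^+(S^1)$ let $\bar f$ be its lift with $\bar f(0)\in[0,1)$, $T(x)=x+1$, and define the Euler cocycle $c(f,g)\in\{0,1\}$ by $\overline{fg}\,T^{c(f,g)}=\bar f\bar g$. $H^2_{bc}(G,\mathbb Z)$ is the cohomology of $G$ computed with bounded Borel $\mathbb Z$-valued cochains, and for a continuous action $\rho$, $\rho^*(e^b)\in H^2_{bc}(G,\mathbb Z)$ is the class of the bounded Borel cocycle $(g,h)\mapsto c(\rho(g),\rho(h))$. *)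

(* Defs.v *)
From HB Require Import structures.
From mathcomp Require Import all_boot all_order all_algebra.
From mathcomp Require Import all_classical all_reals all_analysis.
From mathcomp Require Import generic_quotient.
Set Implicit Arguments. Unset Strict Implicit. Unset Printing Implicit Defensive.
Import Order.TTheory GRing.Theory Num.Theory.
Local Open Scope classical_set_scope.
Local Open Scope ring_scope.
Import numFieldNormedType.Exports.
Local Open Scope quotient_scope.

Section Circle.
Variable R : realType.

Definition circ_rel (x y : R) : bool := (x - y) \is a Num.int.

Lemma circ_rel_refl : reflexive circ_rel.
Proof. by move=> x; rewrite /circ_rel subrr rpred0. Qed.
Lemma circ_rel_sym : symmetric circ_rel.
Proof. by move=> x y; rewrite /circ_rel -opprB rpredN. Qed.
Lemma circ_rel_trans : transitive circ_rel.
Proof.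
move=> y x z hxy hyz; rewrite /circ_rel.
have -> : x - z = (x - y) + (y - z) by rewrite addrA subrK.
by rewrite rpredD.
Qed.

Definition circ_equiv : equiv_rel R :=
  EquivRel circ_rel circ_rel_refl circ_rel_sym circ_rel_trans.

Definition circle_quot := {eq_quot circ_equiv}.
Definition circle := quotient_topology circle_quot.

Definition cproj : R -> circle := \pi_circle.

Definition is_lift (f : circle -> circle) (F : R -> R) : Prop :=
  continuous F /\ forall x, cproj (F x) = f (cproj x).

Definition homeomorphism (X : topologicalType) (f : X -> X) : Prop :=
  exists g : X -> X, [/\ cancel f g, cancel g f, continuous f & continuous g].

(* Homeo^+(S^1): orientation-preserving homeomorphisms, i.e. those admitting
   an increasing lift *)
Definition homeo_plus (f : circle -> circle) : Prop :=
  homeomorphism f /\ exists F, is_lift f F /\ {homo F : x y / x < y}.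

Definition bar (f : circle -> circle) : R -> R :=
  xget (fun x : R => x) [set F | is_lift f F /\ 0 <= F 0 < 1].

Definition euler_c (f g : circle -> circle) : int :=
  xget 0%R [set n : int | forall x, bar (f \o g) (x + n%:~R) = bar f (bar g x)].

Definition has_degree (phi : circle -> circle) (k : int) : Prop :=
  exists F, is_lift phi F /\ forall x, F (x + 1) = F x + k%:~R.

End Circle.

Definition covering_map (X Y : topologicalType) (p : X -> Y) : Prop :=
  continuous p /\
  forall y : Y, exists U : set Y, [/\ open U, U y &
    exists (I : Type) (V : I -> set X),
      [/\ (forall i, open (V i)),
          (forall i j, i <> j -> V i `&` V j = set0),
          p @^-1` U = \bigcup_i V i &
          forall i, exists q : Y -> X,
            [/\ {within V i, continuous p}, {within U, continuous q},
                (forall x, V i x -> U (p x) /\ q (p x) = x) &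
                (forall u, U u -> V i (q u) /\ p (q u) = u)]]].

Definition lcsc_group (G : topologicalType) (mul : G -> G -> G) (one : G)
    (inv : G -> G) : Prop :=
  [/\ (forall x y z, mul x (mul y z) = mul (mul x y) z),
      (forall x, mul one x = x /\ mul x one = x),
      (forall x, mul (inv x) x = one /\ mul x (inv x) = one),
      continuous (fun p : G * G => mul p.1 p.2) /\ continuous inv &
      [/\ hausdorff_space G, locally_compact [set: G] & @second_countable G]].

Definition Borel (T : topologicalType) (A : set T) : Prop :=
  smallest (sigma_algebra setT) open A.

Definition borel_int_fun (T : topologicalType) (b : T -> int) : Prop :=
  forall n : int, Borel (b @^-1` [set n]).

Definition bounded_int_fun (T : Type) (b : T -> int) : Prop :=
  exists M : int, forall t, `|b t| <= M.

(* continuous action G -> Homeo^+(S^1), as a continuous action map *)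
Definition cont_circle_action (R : realType) (G : topologicalType)
    (mul : G -> G -> G) (rho : G -> circle R -> circle R) : Prop :=
  [/\ (forall g, homeo_plus (rho g)),
      (forall g h, rho (mul g h) = rho g \o rho h) &
      continuous (fun p : G * circle R => rho p.1 p.2)].

Definition bc_cohomologous (G : topologicalType) (mul : G -> G -> G)
    (c1 c2 : G -> G -> int) : Prop :=
  exists b : G -> int, [/\ borel_int_fun b, bounded_int_fun b &
    forall g h, c1 g h - c2 g h = b g + b h - b (mul g h)].

(* Main.v *)
Require Import Defs.
From HB Require Import structures.
From mathcomp Require Import all_boot all_order all_algebra.
From mathcomp Require Import all_classical all_reals all_analysis.
From mathcomp Require Import measurable_realfun.
From mathcomp Require Import zify ring lra.
Import Order.TTheory GRing.Theory Num.Theory.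
Import numFieldNormedType.Exports.
Local Open Scope classical_set_scope.
Local Open Scope ring_scope.
Set Implicit Arguments. Unset Strict Implicit. Unset Printing Implicit Defensive.
Section Circ.
Variable R : realType.
Implicit Types x y : R.

Lemma cprojP x y : cproj x = cproj y <-> (x - y) \is a Num.int.
Proof.
split.
- by move=> h; apply/(@eqquotP _ _ (circle_quot R) x y).
- by move=> h; apply/(@eqquotP _ _ (circle_quot R) x y).
Qed.

Lemma cproj_addz x (n : int) : cproj (x + n%:~R) = cproj x.
Proof. by apply/cprojP; rewrite addrC addKr intr_int. Qed.

Lemma int_const_key (h : R -> R) : continuous h -> (forall x, h x \is a Num.int) ->
  forall x y, x <= y -> h x <= h y -> h x = h y.
Proof.
move=> ch hi x y xy hxy; apply/eqP; apply/negPn/negP => hne.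
have lt : h x < h y by rewrite lt_neqAle hne.
have [m hm] := intrP (hi x); have [n hn] := intrP (hi y).
have [c _ hc] : exists2 c, c \in `[x, y] & h c = h x + 2^-1.
  apply: IVT => //; first exact: continuous_subspaceT.
  rewrite min_l ?(ltW lt) // max_r ?(ltW lt) //.
  move: lt; rewrite hm hn ltr_int => lt'.
  have : (m + 1)%:~R <= n%:~R :> R by rewrite ler_int; lia.
  rewrite intrD => h2; apply/andP; split; lra.
have [p hp] := intrP (hi c).
move: hc; rewrite hp hm => hc.
have : (2 * p)%:~R = (2 * m + 1)%:~R :> R.
  rewrite intrD !intrM /=; lra.
move/intr_inj; lia.
Qed.

Lemma int_const (h : R -> R) : continuous h -> (forall x, h x \is a Num.int) ->
  forall x y, h x = h y.
Proof.
move=> ch hi.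
suff H : forall x y, x <= y -> h x = h y.
  by move=> x y; case: (leP x y) => [/H //|/ltW /H ->].
move=> x y xy; case: (leP (h x) (h y)) => [|/ltW] hxy.
  exact: int_const_key.
apply: oppr_inj; apply: (@int_const_key (fun z => - h z)) => //.
- by move=> z; exact: (continuousN (ch z)).
- by move=> z; rewrite rpredN.
- by rewrite lerN2.
Qed.

Lemma lift_diff (F1 F2 : R -> R) : continuous F1 -> continuous F2 ->
  (forall x, cproj (F1 x) = cproj (F2 x)) ->
  exists n : int, forall x, F1 x = F2 x + n%:~R.
Proof.
move=> c1 c2 e.
have ci : forall x, (F1 - F2) x \is a Num.int by move=> x; apply/cprojP/e.
have cc : continuous (F1 - F2) by move=> x; exact: (continuousB (c1 x) (c2 x)).
have [n hn] := intrP (ci 0); exists n => x.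
have := @int_const _ cc ci x 0; rewrite hn /= => <-; by rewrite addrC subrK.
Qed.


Lemma shift_int (F : R -> R) d : (forall x, F (x+1) = F x + d) ->
  forall x (m : int), F (x + m%:~R) = F x + d * m%:~R.
Proof.
move=> h.
have hn : forall (n : nat) x, F (x + n%:R) = F x + d * n%:R.
  elim=> [|n IH] x; first by rewrite !mulr0 !addr0.
  by rewrite -natr1 addrA h IH mulrDr mulr1 addrA.
move=> x [n|n].
- by rewrite -pmulrn hn.
- rewrite NegzE intrN -pmulrn.
  have := hn n.+1 (x - n.+1%:R); rewrite subrK => ->.
  by rewrite mulrN addrK.
Qed.

Lemma cont_shift (A : R -> R) (c : R) : continuous A -> continuous (fun x => A (x + c)).
Proof.
move=> cA x.
have cs : continuous (fun x : R => x + c).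
  by move=> y; apply: continuousD; [exact: cvg_id | exact: cvg_cst].
exact: (@continuous_comp _ _ _ (fun x : R => x + c) A x (cs x) (cA _)).
Qed.

Section HP.
Variable f : circle R -> circle R.
Hypothesis hf : homeo_plus f.

Lemma bar_spec : is_lift f (bar f) /\ 0 <= bar f 0 < 1.
Proof.
suff : exists F : R -> R, is_lift f F /\ 0 <= F 0 < 1.
  by move/(xgetPex (fun x : R => x)).
case: hf => _ [F [[cF lF] _]].
exists (fun x => F x + (- Num.floor (F 0))%:~R); split; first split.
- by move=> x; apply: continuousD; [exact: cF | exact: cvg_cst].
- by move=> x; rewrite cproj_addz.
- have := floor_itv (F 0); rewrite intrN intrD; move=> /andP [h1 h2].
  apply/andP; split; lra.
Qed.

Lemma bar_cont : continuous (bar f). Proof. by case: bar_spec => [[]]. Qed.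
Lemma bar_lift x : cproj (bar f x) = f (cproj x). Proof. by case: bar_spec => [[]]. Qed.
Lemma bar0 : 0 <= bar f 0 < 1. Proof. by case: bar_spec. Qed.

Lemma bar_incr : {homo bar f : x y / x < y}.
Proof.
case: hf => _ [F [[cF lF] iF]].
have [n hn] := @lift_diff (bar f) F bar_cont cF (fun x => etrans (bar_lift x) (esym (lF x))).
by move=> x y xy; rewrite !hn ltrD2r iF.
Qed.

Lemma f_inj : injective f.
Proof. by case: hf => [[g [fK _ _ _]] _]; exact: can_inj fK. Qed.

Lemma bar1 x : bar f (x + 1) = bar f x + 1.
Proof.
have [n hn] : exists n : int, forall x, bar f (x + 1) = bar f x + n%:~R.
  apply: lift_diff; [exact: cont_shift bar_cont | exact: bar_cont |].
  by move=> y; rewrite !bar_lift -[1]/(1%:~R) cproj_addz.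
suff n1 : n = 1 by rewrite hn n1.
have h10 : bar f 1 = bar f 0 + n%:~R by rewrite -hn add0r.
have npos : 0 < n.
  have := @bar_incr 0 1 ltr01; rewrite h10.
  by rewrite ltrDl ltr0z.
have : ~ (2 <= n).
  move=> n2.
  have [c cI hc] : exists2 c, c \in `[0, 1] & bar f c = bar f 0 + 1.
    apply: IVT => //; first exact: continuous_subspaceT bar_cont.
    have h01 := @bar_incr 0 1 ltr01.
    rewrite h10 min_l; last by rewrite lerDl ler0z ltW.
    rewrite max_r; last by rewrite lerDl ler0z ltW.
    have : (2%:~R : R) <= n%:~R by rewrite ler_int.
    move=> h2; apply/andP; split; lra.
  have : cproj c = cproj 0.
    apply: f_inj; rewrite -!bar_lift hc -[1]/(1%:~R) cproj_addz //.
  move/cprojP; rewrite subr0 => /intrP [p hp].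
  move: cI; rewrite in_itv /= hp ler0z -[1%R]/(1%:~R) ler_int => /andP [p0 p1].
  have : p = 0 \/ p = 1 by lia.
  case=> hp'; move: hc; rewrite hp hp' /=.
  - by rewrite mulr0z => h; lra.
  - rewrite -[1%:~R]/(1%R) h10 => h; have : (n%:~R : R) = 1 by lra.
    rewrite -[1]/(1%:~R) => /intr_inj hn1.
    by move: n2; rewrite hn1.
lia.
Qed.

Lemma barz x (m : int) : bar f (x + m%:~R) = bar f x + m%:~R.
Proof. by rewrite (@shift_int _ _ bar1) mul1r. Qed.

Lemma bar_le x y : x <= y -> bar f x <= bar f y.
Proof. by rewrite le_eqVlt => /orP [/eqP -> //|/bar_incr /ltW]. Qed.

End HP.

Lemma euler_spec (f g : circle R -> circle R) : homeo_plus f -> homeo_plus g ->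
  homeo_plus (f \o g) ->
  forall x, bar (f \o g) (x + (euler_c f g)%:~R) = bar f (bar g x).
Proof.
move=> hf hg hfg.
suff : exists n : int, forall x, bar (f \o g) (x + n%:~R) = bar f (bar g x).
  by move/(xgetPex 0).
have [n hn] : exists n : int, forall x, bar f (bar g x) = bar (f \o g) x + n%:~R.
  apply: lift_diff; last first.
    by move=> x; rewrite (@bar_lift _ hf) (@bar_lift _ hg) (@bar_lift _ hfg).
  - exact: (@bar_cont _ hfg).
  - move=> x; apply: continuous_comp; [exact: (@bar_cont _ hg) | exact: (@bar_cont _ hf)].
by exists n => x; rewrite hn (@barz _ hfg).
Qed.
End Circ.

Section Frac.
Variable R : realType.
Implicit Types x : R.
Definition frac x := x - (Num.floor x)%:~R.
Lemma frac_itv x : 0 <= frac x < 1.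
Proof. by have := floor_itv x; rewrite /frac intrD => /andP [h1 h2]; apply/andP; split; lra. Qed.
Lemma frac_addz x (m : int) : frac (x + m%:~R) = frac x.
Proof. by rewrite /frac floorDrz ?intr_int // intrKfloor intrD; lra. Qed.
Lemma frac_id x : 0 <= x < 1 -> frac x = x.
Proof.
move=> /andP [h1 h2]; rewrite /frac (@floor_def _ x 0) ?subr0 //.
by rewrite add0r mulr0z h1.
Qed.
Definition sfr (q : circle R) : R := frac (repr q).
Lemma sfr_cproj x : sfr (cproj x) = frac x.
Proof.
have : cproj (repr (cproj x)) = cproj x by rewrite /cproj reprK.
move/cprojP/intrP => [m hm].
by rewrite /sfr -(subrK x (repr (cproj x))) hm addrC frac_addz.
Qed.
Lemma frac_meas : measurable_fun setT (frac : R -> R).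
Proof.
apply: measurable_funB; first exact: measurable_id.
by apply: nondecreasing_measurable => // x y xy; rewrite ler_int le_floor.
Qed.
Lemma V_open a : 0 < a <= 1 -> open [set q : circle R | 0 < sfr q < a].
Proof.
move=> /andP [a0 a1].
rewrite /open /= /quotient_open.
suff -> : @cproj R @^-1` [set q | 0 < sfr q < a] =
   \bigcup_(n in [set: int]) [set` `]n%:~R, n%:~R + a[%R].
  by apply: bigcup_open => n _; exact: interval_open.
apply/seteqP; split => x /=.
- rewrite sfr_cproj /frac => /andP [h1 h2]; exists (Num.floor x) => //=.
  by rewrite in_itv /=; apply/andP; split; lra.
- move=> [n _]; rewrite /= in_itv /= => /andP [h1 h2].
  have fl : Num.floor x = n by apply: floor_def; rewrite intrD; apply/andP; split; lra.
  by rewrite sfr_cproj /frac fl; apply/andP; split; lra.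
Qed.
End Frac.

Definition Tp (T : topologicalType) (t0 : T) : Type := T.
Section BorelT.
Variables (R : realType) (T : topologicalType) (t0 : T).
HB.instance Definition _ := Choice.on (Tp t0).
HB.instance Definition _ := isPointed.Build (Tp t0) t0.
Definition Tm := g_sigma_algebraType (@open T : set (set (Tp t0))).

Lemma sfr_comp_meas (u : T -> circle R) : continuous u ->
  measurable_fun (setT : set Tm) (fun t => sfr (u t)).
Proof.
move=> cu.
have oP : forall V : set (circle R), open V -> @measurable _ Tm (u @^-1` V).
  by move=> V oV; apply: sub_sigma_algebra; apply: (proj1 (continuousP u) cu).
apply: (measurability (@RGenInftyO.G R)) => [|/= _ [_] [r] -> <-].
  exact: RGenInftyO.measurableE.
rewrite setTI.
have E : (fun t => sfr (u t)) @^-1` `]-oo, r[ = [set t | sfr (u t) < r].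
  by apply/seteqP; split => t /=; rewrite in_itv.
rewrite E; clear E.
have [r0|r0] := leP r 0.
  suff -> : [set t | sfr (u t) < r] = set0 by exact: measurable0.
  apply/seteqP; split => t //=; have /andP [h1 h2] := frac_itv (repr (u t)).
  rewrite /sfr => h; exfalso; lra.
have [r1|r1] := ltP 1 r.
  suff -> : [set t | sfr (u t) < r] = setT by exact: measurableT.
  apply/seteqP; split => t //= _; have /andP [h1 h2] := frac_itv (repr (u t)).
  rewrite /sfr; lra.
suff -> : [set t | sfr (u t) < r] =
    ~` (u @^-1` [set q | 0 < sfr q < 1]) `|` u @^-1` [set q | 0 < sfr q < r].
  apply: measurableU; last by apply: oP; apply: V_open; rewrite r0 r1.
  by apply: measurableC; apply: oP; apply: V_open; rewrite ltr01 lexx.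
apply/seteqP; split => t /=; have /andP [h1 h2] := frac_itv (repr (u t));
  rewrite /sfr in h1 h2 *.
- move=> h; have [z|z] := leP (frac (repr (u t))) 0.
    by left; move/andP => [z' _]; lra.
  by right; apply/andP; split.
- case=> [h|/andP [_ h]] //.
  have [z|z] := leP (frac (repr (u t))) 0; first lra.
  by exfalso; apply: h; apply/andP; split.
Qed.
End BorelT.
Unset Implicit Arguments.
Theorem lemma4p3 (R : realType) (G : topologicalType) (mul : G -> G -> G)
    (one : G) (inv : G -> G) (rho0 rho1 : G -> circle R -> circle R)
    (phi : circle R -> circle R) (k : int) :
  lcsc_group mul one inv ->
  cont_circle_action mul rho0 -> cont_circle_action mul rho1 ->
  covering_map phi -> has_degree phi k ->
  (forall g, rho0 g \o phi = phi \o rho1 g) ->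
  bc_cohomologous mul (fun g h => euler_c (rho0 g) (rho0 h))
                      (fun g h => k * euler_c (rho1 g) (rho1 h)).
Proof.
move=> _ [hp0 hm0 hc0] [hp1 hm1 hc1] _ [Phi [[cPhi lPhi] dPhi]] comm.
pose A g := bar (rho0 g); pose B g := bar (rho1 g).
have Phiz : forall x (m : int), Phi (x + m%:~R) = Phi x + k%:~R * m%:~R.
  exact: (@shift_int R Phi _ dPhi).
have hbeta : forall g, exists n : int, forall x, Phi (B g x) = A g (Phi x) + n%:~R.
  move=> g; apply: lift_diff.
  - move=> x; apply: continuous_comp; [exact: (@bar_cont R _ (hp1 g)) | exact: cPhi].
  - move=> x; apply: continuous_comp; [exact: cPhi | exact: (@bar_cont R _ (hp0 g))].
  move=> x; rewrite lPhi (@bar_lift R _ (hp1 g)) (@bar_lift R _ (hp0 g)) lPhi.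
  exact: (esym (congr1 (fun h => h (cproj x)) (comm g))).
pose beta g : int := Num.floor (Phi (B g 0) - A g (Phi 0)).
have hb : forall g x, Phi (B g x) = A g (Phi x) + (beta g)%:~R.
  move=> g x; have [n hn] := hbeta g.
  suff -> : beta g = n by exact: hn.
  by rewrite /beta (hn 0) addrC addKr intrKfloor.
exists (fun g => - beta g); split.
- have cont : forall (rho : G -> circle R -> circle R) c,
      continuous (fun p : G * circle R => rho p.1 p.2) -> continuous (fun g => rho g c).
    move=> rho c hc g.
    have := @continuous_comp _ _ _ (fun g => (g, c)) (fun p : G * circle R => rho p.1 p.2) g.
    apply; last exact: (hc (g, c)).
    exact: (cvg_pair cvg_id (cvg_cst c)).
  set n0 := Num.floor (Phi 0).
  pose y' := Phi 0 - n0%:~R.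
  pose u1 g := rho1 g (cproj 0); pose w g := rho0 g (cproj 0); pose q g := rho0 g (cproj y').
  pose F g := Phi (sfr (u1 g)) - n0%:~R - sfr (w g) - frac (sfr (q g) - sfr (w g)).
  have hF : forall g, (beta g)%:~R = F g.
    move=> g.
    have hB : sfr (u1 g) = B g 0.
      by rewrite /u1 -(@bar_lift R _ (hp1 g) 0) sfr_cproj frac_id //; exact: (@bar0 R _ (hp1 g)).
    have hA : sfr (w g) = A g 0.
      by rewrite /w -(@bar_lift R _ (hp0 g) 0) sfr_cproj frac_id //; exact: (@bar0 R _ (hp0 g)).
    have hq : sfr (q g) = frac (A g y') by rewrite /q -(@bar_lift R _ (hp0 g)) sfr_cproj.
    have [y0 y1] : n0%:~R <= Phi 0 /\ Phi 0 < n0%:~R + 1.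
      by have := floor_itv (Phi 0); rewrite intrD => /andP.
    have L1 : A g 0 <= A g y' by apply: (@bar_le R _ (hp0 g)); rewrite /y'; lra.
    have L2 : A g y' < A g 1 by apply: (@bar_incr R _ (hp0 g)); rewrite /y'; lra.
    have L3 : A g 1 = A g 0 + 1 by rewrite -(@bar1 R _ (hp0 g)) add0r.
    have fr : frac (sfr (q g) - sfr (w g)) = A g y' - A g 0.
      have e : frac (A g y') - A g 0 = (A g y' - A g 0) + (- Num.floor (A g y'))%:~R.
        by rewrite /frac intrN; lra.
      rewrite hq hA e frac_addz frac_id //; apply/andP; split; lra.
    have E : A g (Phi 0) = A g y' + n0%:~R by rewrite -(@barz R _ (hp0 g)) /y' subrK.
    have E2 := hb g 0.
    rewrite /F fr hA hB; lra.
  have mF : measurable_fun (setT : set (Tm one)) F.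
    apply: measurable_funB; last first.
      apply: measurableT_comp; first exact: frac_meas.
      by apply: measurable_funB; apply: sfr_comp_meas; apply: cont.
    apply: measurable_funB; last by apply: sfr_comp_meas; apply: cont.
    apply: measurable_funB; last exact: measurable_cst.
    apply: measurableT_comp; first exact: continuous_measurable_fun.
    by apply: sfr_comp_meas; apply: cont.
  move=> n.
  have -> : (fun g => - beta g) @^-1` [set n] = setT `&` F @^-1` [set (- n)%:~R].
    apply/seteqP; split => g /=.
    - by move=> <-; split => //; rewrite -hF opprK.
    - by move=> [_ h]; apply: (@intr_inj R); rewrite intrN hF h intrN opprK.
  exact: (mF measurableT _ (measurable_set1 _)).
- have [cM _ hM] := EVT_max ler01 (continuous_subspaceT cPhi).
  have [cm _ hm] := EVT_min ler01 (continuous_subspaceT cPhi).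
  set n0 := Num.floor (Phi 0).
  pose K := `|Phi cm| + `|Phi cM| + `|(n0%:~R : R)| + 2.
  exists (Num.ceil K) => g.
  rewrite normrN -(ler_int R) intr_norm; apply: le_trans (ceil_ge K).
  have hbr : (beta g)%:~R = Phi (B g 0) - A g (Phi 0) by rewrite (hb g 0); lra.
  have [b0 b1] : 0 <= B g 0 /\ B g 0 < 1 by apply/andP; exact: (@bar0 R _ (hp1 g)).
  have inI : B g 0 \in `[0, 1] by rewrite in_itv /= b0 ltW.
  have P1 := hM _ inI; have P2 := hm _ inI.
  have [a0 a1] : 0 <= A g 0 /\ A g 0 < 1 by apply/andP; exact: (@bar0 R _ (hp0 g)).
  have [y0 y1] : n0%:~R <= Phi 0 /\ Phi 0 < n0%:~R + 1.
    by have := floor_itv (Phi 0); rewrite intrD => /andP.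
  have E : A g (Phi 0) = A g (Phi 0 - n0%:~R) + n0%:~R.
    by rewrite -(@barz R _ (hp0 g)) subrK.
  have L1 : A g 0 <= A g (Phi 0 - n0%:~R) by apply: (@bar_le R _ (hp0 g)); lra.
  have L2 : A g (Phi 0 - n0%:~R) <= A g 1.
    by apply: (@bar_le R _ (hp0 g)); lra.
  have L3 : A g 1 = A g 0 + 1 by rewrite -(@bar1 R _ (hp0 g)) add0r.
  have q1 := ler_norm (Phi cm); have q2 := ler_norm (- Phi cm); rewrite normrN in q2.
  have q3 := ler_norm (Phi cM); have q4 := ler_norm (- Phi cM); rewrite normrN in q4.
  have q5 := ler_norm (n0%:~R : R); have q6 := ler_norm (- (n0%:~R : R)); rewrite normrN in q6.
  rewrite hbr ler_norml; apply/andP; split; rewrite /K; lra.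
move=> g h.
have hgh0 : homeo_plus (rho0 g \o rho0 h) by rewrite -hm0; exact: hp0.
have hgh1 : homeo_plus (rho1 g \o rho1 h) by rewrite -hm1; exact: hp1.
set c0 := euler_c (rho0 g) (rho0 h); set c1 := euler_c (rho1 g) (rho1 h).
have E1 := hb g (B h 0).
have E2 := hb h 0.
have E3 : A g (A h (Phi 0) + (beta h)%:~R) = A g (A h (Phi 0)) + (beta h)%:~R.
  exact: (@barz R _ (hp0 g)).
have E4 : A (mul g h) (Phi 0 + c0%:~R) = A g (A h (Phi 0)).
  rewrite /A hm0; exact: (@euler_spec R _ _ (hp0 g) (hp0 h) hgh0 (Phi 0)).
have E5 : A (mul g h) (Phi 0 + c0%:~R) = A (mul g h) (Phi 0) + c0%:~R.
  exact: (@barz R _ (hp0 (mul g h))).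
have E6 : B (mul g h) (0 + c1%:~R) = B g (B h 0).
  rewrite /B hm1; exact: (@euler_spec R _ _ (hp1 g) (hp1 h) hgh1 0).
have E7 := hb (mul g h) (0 + c1%:~R).
have E8 := Phiz 0 c1.
have E9 : A (mul g h) (Phi 0 + k%:~R * c1%:~R) = A (mul g h) (Phi 0) + k%:~R * c1%:~R.
  rewrite -intrM; exact: (@barz R _ (hp0 (mul g h))).
rewrite E6 E8 E9 in E7.
rewrite E2 E3 in E1.
apply: (@intr_inj R); rewrite !intrD !intrN !intrM.
lra.
Qed.
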